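(* If $\otimes$ is the drastic minimum $T_d$ and $\oplus$ is a disjunctive uninorm, then $(\otimes,\oplus)$ satisfies the rearrangement inequality. If $\oplus$ is the drastic maximum $T_d'$ and $\otimes$ is a conjunctive uninorm, then $(\otimes,\oplus)$ satisfies the dual rearrangement inequality.
   Context: A uninorm is a function $\otimes:[0,1]^2\to[0,1]$ that is commutative, associative, monotonic ($x\leq y$ implies $x\otimes z\leq y\otimes z$), and has an identity element $e\in[0,1]$. A uninorm is conjunctive if $0\otimes 1=0$ and disjunctive if $0\otimes1=1$. The drastic minimum is $T_d(x,y)=\min(x,y)$ if $\max(x,y)=1$ and $0$ otherwise; the drastic maximum is $T_d'(x,y)=\max(x,y)$ if $\min(x,y)=0$ and $1$ otherwise. $(\otimes,\oplus)$ satisfies the rearrangement inequality if for every $n\geq1$, all $0\leq x_1\leq\cdots\leq x_n\leq 1$, $0\leq y_1\leq\cdots\leq y_n\leq 1$ and every permutation $\sigma$ of $\{1,\dots,n\}$, $$(x_n\otimes y_1)\oplus\cdots\oplus(x_1\otimes y_n)\leq (x_{\sigma(1)}\otimes y_1)\oplus\cdots\oplus(x_{\sigma(n)}\otimes y_n)\leq (x_1\otimes y_1)\oplus\cdots\oplus(x_n\otimes y_n),$$ and the dual rearrangement inequality if for all such data $$(x_n\oplus y_1)\otimes\cdots\otimes(x_1\oplus y_n)\geq (x_{\sigma(1)}\oplus y_1)\otimes\cdots\otimes(x_{\sigma(n)}\oplus y_n)\geq (x_1\oplus y_1)\otimes\cdots\otimes(x_n\oplus y_n).$$ *)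

(* Defs.v *)
From mathcomp Require Import all_boot all_order all_algebra.
From mathcomp Require Import all_fingroup.
From mathcomp Require Import reals.
Set Implicit Arguments. Unset Strict Implicit. Unset Printing Implicit Defensive.
Import Order.TTheory GRing.Theory Num.Theory.
Local Open Scope ring_scope.

Section Defs.
Variable R : realFieldType.

Definition unit_int (x : R) : bool := (0 <= x) && (x <= 1).

(* A uninorm on [0,1]: operation R -> R -> R, with the axioms required on [0,1]
   (values outside [0,1] are irrelevant). *)
Definition uninorm (op : R -> R -> R) : Prop :=
  (forall x y, unit_int x -> unit_int y -> unit_int (op x y)) /\
  (forall x y, unit_int x -> unit_int y -> op x y = op y x) /\
  (forall x y z, unit_int x -> unit_int y -> unit_int z ->
     op x (op y z) = op (op x y) z) /\
  (forall x y z, unit_int x -> unit_int y -> unit_int z ->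
     x <= y -> op x z <= op y z) /\
  (exists e, unit_int e /\ forall x, unit_int x -> op e x = x).

Definition conjunctive (op : R -> R -> R) : Prop := op 0 1 = 0.
Definition disjunctive (op : R -> R -> R) : Prop := op 0 1 = 1.

Definition drastic_min (x y : R) : R :=
  if Num.max x y == 1 then Num.min x y else 0.
Definition drastic_max (x y : R) : R :=
  if Num.min x y == 0 then Num.max x y else 1.

(* iterated operation  f 0 `op` f 1 `op` ... `op` f (n-1)  (left-bracketed;
   only used for n >= 1) *)
Definition iter_op (op : R -> R -> R) (n : nat) (f : nat -> R) : R :=
  foldl op (f 0%N) [seq f i | i <- iota 1 n.-1].

Definition sorted01 (n : nat) (x : 'I_n -> R) : Prop :=
  (forall i, unit_int (x i)) /\ (forall i j : 'I_n, (i <= j)%N -> x i <= x j).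

(* extend a function on 'I_n to nat (value 0 outside the range; never used) *)
Definition ext (n : nat) (x : 'I_n -> R) (i : nat) : R :=
  match insub i with Some j => x j | None => 0 end.

Definition rearrangement (otimes oplus : R -> R -> R) : Prop :=
  forall (n : nat) (x y : 'I_n -> R) (s : 'S_n), (0 < n)%N ->
    sorted01 x -> sorted01 y ->
    iter_op oplus n (fun i => otimes (ext x (n - 1 - i)%N) (ext y i))
      <= iter_op oplus n (fun i => otimes (ext (fun j => x (s j)) i) (ext y i))
    /\
    iter_op oplus n (fun i => otimes (ext (fun j => x (s j)) i) (ext y i))
      <= iter_op oplus n (fun i => otimes (ext x i) (ext y i)).

Definition dual_rearrangement (otimes oplus : R -> R -> R) : Prop :=
  forall (n : nat) (x y : 'I_n -> R) (s : 'S_n), (0 < n)%N ->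
    sorted01 x -> sorted01 y ->
    iter_op otimes n (fun i => oplus (ext (fun j => x (s j)) i) (ext y i))
      <= iter_op otimes n (fun i => oplus (ext x (n - 1 - i)%N) (ext y i))
    /\
    iter_op otimes n (fun i => oplus (ext x i) (ext y i))
      <= iter_op otimes n (fun i => oplus (ext (fun j => x (s j)) i) (ext y i)).

End Defs.

(* Main.v *)
Require Import Defs.
From HB Require Import structures.
From mathcomp Require Import all_boot all_order all_algebra.
From mathcomp Require Import all_fingroup.
From mathcomp Require Import reals.
From mathcomp Require Import lra zify.
Set Implicit Arguments. Unset Strict Implicit. Unset Printing Implicit Defensive.
Import Order.TTheory GRing.Theory Num.Theory.
Local Open Scope ring_scope.

Section Gen.
Variable R : realType.
Variable op : R -> R -> R.
Variable e : R.
Hypothesis He : unit_int e.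
Hypothesis Hcl : forall x y, unit_int x -> unit_int y -> unit_int (op x y).
Hypothesis Hcomm : forall x y, unit_int x -> unit_int y -> op x y = op y x.
Hypothesis Hassoc : forall x y z, unit_int x -> unit_int y -> unit_int z ->
     op x (op y z) = op (op x y) z.
Hypothesis He1 : forall x, unit_int x -> op e x = x.

Definition I01 := {x : R | unit_int x}.
Definition opI (a b : I01) : I01 := exist _ (op (val a) (val b)) (Hcl (valP a) (valP b)).
Definition eI : I01 := exist _ e He.
Lemma opIA : associative opI.
Proof. move=> a b c; apply: val_inj => /=; exact: Hassoc (valP a) (valP b) (valP c). Qed.
Lemma opIC : commutative opI.
Proof. move=> a b; apply: val_inj => /=; exact: Hcomm (valP a) (valP b). Qed.
Lemma opI1m : left_id eI opI.
Proof. move=> a; apply: val_inj => /=; exact: He1 (valP a). Qed.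
HB.instance Definition _ := Monoid.isComLaw.Build I01 eI opI opIA opIC opI1m.

Definition BB n (h : 'I_n -> R) : R := val (\big[opI/eI]_(i < n) insubd eI (h i)).

Lemma valI (r : R) : unit_int r -> val (insubd eI r) = r.
Proof. by move=> hr; rewrite insubdK. Qed.

Lemma iter_big n f : (0 < n)%N -> (forall i, unit_int (f i)) ->
  iter_op op n f = BB (fun i : 'I_n => f i).
Proof.
case: n => // n _ hf; elim: n => [|n IH].
  by rewrite /iter_op /BB big_ord_recr big_ord0 /= valI // He1.
rewrite /BB big_ord_recr /=.
rewrite /BB in IH; rewrite -IH valI //.
rewrite /iter_op.
have -> : iota 1 n.+2.-1 = iota 1 n ++ [:: n.+1].
  by rewrite -(addn1 n) iotaD add1n addn1.
by rewrite map_cat foldl_cat.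
Qed.

Lemma BB_ext n (h h' : 'I_n -> R) : (forall i, h i = h' i) -> BB h = BB h'.
Proof. by move=> H; rewrite /BB; congr val; apply: eq_bigr => i _; rewrite H. Qed.

Lemma BB_split n (h : 'I_n -> R) (k j : 'I_n) : k != j -> (forall i, unit_int (h i)) ->
  BB h = op (op (h k) (h j)) (val (\big[opI/eI]_(i | (i != k) && (i != j)) insubd eI (h i))).
Proof.
move=> kj hh; rewrite /BB (bigD1 k) // (bigD1 j) /=; last by rewrite eq_sym.
by rewrite !valI // Hassoc //; apply: valP.
Qed.

Variable rel : R -> R -> Prop.
Hypothesis rel_refl : forall a, rel a a.
Hypothesis rel_trans : forall a b c, rel a b -> rel b c -> rel a c.
Hypothesis rel_mono : forall a b c, unit_int a -> unit_int b -> unit_int c ->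
  rel a b -> rel (op a c) (op b c).

Lemma swapB n (h h' : 'I_n -> R) (k j : 'I_n) : k != j ->
  (forall i, unit_int (h i)) -> (forall i, unit_int (h' i)) ->
  (forall i, i != k -> i != j -> h' i = h i) ->
  rel (op (h k) (h j)) (op (h' k) (h' j)) -> rel (BB h) (BB h').
Proof.
move=> kj hh hh' H Hr; rewrite (BB_split kj hh) (BB_split kj hh').
have -> : \big[opI/eI]_(i | (i != k) && (i != j)) insubd eI (h' i) =
          \big[opI/eI]_(i | (i != k) && (i != j)) insubd eI (h i).
  by apply: eq_bigr => i /andP [? ?]; rewrite H.
by apply: rel_mono => //; [apply: Hcl | apply: Hcl | apply: valP].
Qed.

Variable T : R -> R -> R.
Hypothesis HT : forall a b, unit_int a -> unit_int b -> unit_int (T a b).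
Hypothesis H2 : forall a b c d, unit_int a -> unit_int b -> unit_int c -> unit_int d ->
  b <= a -> c <= d -> rel (op (T a c) (T b d)) (op (T b c) (T a d)).

Definition S n (x y : 'I_n -> R) (s : 'S_n) := BB (fun i => T (x (s i)) (y i)).

Lemma swapS n (x y : 'I_n -> R) (s : 'S_n) (k j : 'I_n) : sorted01 x -> sorted01 y ->
  (k <= j)%N -> x (s j) <= x (s k) -> rel (S x y s) (S x y (tperm k j * s)%g).
Proof.
move=> [ux sx] [uy sy] kj hx.
have [<-|kj'] := eqVneq k j; first by rewrite tperm1 mul1g.
apply: swapB kj' _ _ _ _ => //.
- by move=> i; apply: HT.
- by move=> i; apply: HT.
- by move=> i ik ij; rewrite permM tpermD // eq_sym.
- rewrite !permM tpermL tpermR; apply: H2 => //; exact: sy.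
Qed.

Lemma toid n (x y : 'I_n -> R) : sorted01 x -> sorted01 y -> forall m (s : 'S_n),
  (forall i : 'I_n, (m <= i)%N -> s i = i) -> rel (S x y s) (S x y 1).
Proof.
move=> hx hy; elim=> [|m IH] s Hs.
  by have -> : s = 1%g by apply/permP => i; rewrite perm1 Hs.
case: (ltnP m n) => [lmn | lnm]; last first.
  apply: IH => i Hi; apply: Hs; have := ltn_ord i; lia.
set j := Ordinal lmn; set k := (s^-1)%g j.
have sk : s k = j by rewrite permKV.
have kle : (k <= m)%N.
  rewrite leqNgt; apply/negP => H; have := Hs k H; rewrite sk => /(congr1 val) /=; lia.
have sjle : (s j <= m)%N.
  rewrite leqNgt; apply/negP => H; have := Hs (s j) H; move/perm_inj => E.
  by move: H; rewrite E /= ltnn.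
apply: rel_trans (swapS hx hy (k:=k) (j:=j) _ _) (IH _ _) => //.
  rewrite sk; apply: hx.2; exact: sjle.
move=> i Hi; rewrite permM.
have [->|ij] := eqVneq i j; first by rewrite tpermR sk.
have ik : i != k.
  apply/eqP => E; move: ij; rewrite E; move/eqP; apply; apply: val_inj => /=.
  move: Hi; rewrite E; lia.
rewrite tpermD 1?eq_sym //; apply: Hs.
have : val i != m by move: ij; apply: contra => /eqP E; apply/eqP/val_inj.
by move=> H; rewrite ltn_neqAle Hi andbT eq_sym.
Qed.

Definition rperm n : 'S_n := perm (@rev_ord_inj n).

Lemma torev n (x y : 'I_n -> R) : sorted01 x -> sorted01 y -> forall m (s : 'S_n),
  (forall i : 'I_n, (m <= i)%N -> s i = rev_ord i) -> rel (S x y (rperm n)) (S x y s).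
Proof.
move=> hx hy; elim=> [|m IH] s Hs.
  by have -> : s = rperm n by apply/permP => i; rewrite /rperm permE Hs.
case: (ltnP m n) => [lmn | lnm]; last first.
  apply: IH => i Hi; apply: Hs; have := ltn_ord i; lia.
set j := Ordinal lmn; set t := rev_ord j; set k := (s^-1)%g t.
have sk : s k = t by rewrite permKV.
have kle : (k <= m)%N.
  rewrite leqNgt; apply/negP => H; have := Hs k H; rewrite sk => /rev_ord_inj.
  by move/(congr1 val) => /= E; move: H; rewrite E ltnn.
have sjge : (t <= s j)%N.
  rewrite leqNgt; apply/negP => H.
  have H' : (m < rev_ord (s j))%N by move: H; rewrite /= ; have := ltn_ord (s j); lia.
  have := Hs _ H'; rewrite rev_ordK; move/perm_inj => E.
  by move: H'; rewrite E /= ltnn.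
set s' := (tperm k j * s)%g.
have Es : s = (tperm k j * s')%g by rewrite /s' mulgA tperm2 mul1g.
rewrite {1}Es.
apply: rel_trans (IH s' _) (swapS hx hy (k:=k) (j:=j) _ _) => //; last first.
  rewrite /s' !permM tpermL tpermR sk; apply: hx.2; exact: sjge.
move=> i Hi; rewrite /s' permM.
have [->|ij] := eqVneq i j; first by rewrite tpermR sk.
have ik : i != k.
  apply/eqP => E; move: ij; rewrite E; move/eqP; apply; apply: val_inj => /=.
  move: Hi; rewrite E; lia.
rewrite tpermD 1?eq_sym //; apply: Hs.
have : val i != m by move: ij; apply: contra => /eqP E; apply/eqP/val_inj.
by move=> H; rewrite ltn_neqAle Hi andbT eq_sym.
Qed.

End Gen.

Section Main.
Variable R : realType.

Lemma ext_ord n (f : 'I_n -> R) (i : 'I_n) : ext f i = f i.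
Proof. by rewrite /ext valK. Qed.

Lemma ext_unit n (f : 'I_n -> R) : (forall i, unit_int (f i)) -> forall i, unit_int (ext f i).
Proof.
move=> hf i; rewrite /ext; case: insubP => [j _ _|_]; first exact: hf.
by rewrite /unit_int lexx ler01.
Qed.

Lemma dminE (a c : R) : unit_int a -> unit_int c ->
  drastic_min a c = if a == 1 then c else if c == 1 then a else 0.
Proof.
move=> /andP[a0 a1] /andP[c0 c1]; rewrite /drastic_min.
have [->|ha] := eqVneq a 1.
  by rewrite (max_l c1) eqxx (min_r c1).
have [->|hc] := eqVneq c 1.
  by rewrite (max_r a1) eqxx (min_l a1).
by have [ac|ca] := leP a c; rewrite ?(negbTE hc) ?(negbTE ha).
Qed.

Lemma dmaxE (a c : R) : unit_int a -> unit_int c ->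
  drastic_max a c = if a == 0 then c else if c == 0 then a else 1.
Proof.
move=> /andP[a0 a1] /andP[c0 c1]; rewrite /drastic_max.
have [->|ha] := eqVneq a 0.
  by rewrite (min_l c0) eqxx (max_r c0).
have [->|hc] := eqVneq c 0.
  by rewrite (min_r a0) eqxx (max_l a0).
by have [ac|ca] := leP a c; rewrite ?(negbTE hc) ?(negbTE ha).
Qed.

Lemma dmin_unit (a c : R) : unit_int a -> unit_int c -> unit_int (drastic_min a c).
Proof.
move=> ha hc; rewrite dminE //.
case: ifP => _ //; case: ifP => _ //; by rewrite /unit_int lexx ler01.
Qed.

Lemma dmax_unit (a c : R) : unit_int a -> unit_int c -> unit_int (drastic_max a c).
Proof.
move=> ha hc; rewrite dmaxE //.
case: ifP => _ //; case: ifP => _ //; by rewrite /unit_int lexx ler01.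
Qed.


Lemma u0 : unit_int (0:R). Proof. by rewrite /unit_int lexx ler01. Qed.
Lemma u1 : unit_int (1:R). Proof. by rewrite /unit_int lexx ler01. Qed.

Lemma H2min (U : R -> R -> R) :
  (forall x y, unit_int x -> unit_int y -> unit_int (U x y)) ->
  (forall x y, unit_int x -> unit_int y -> U x y = U y x) ->
  (forall x y z, unit_int x -> unit_int y -> unit_int z -> x <= y -> U x z <= U y z) ->
  U 0 1 = 1 ->
  forall a b c d, unit_int a -> unit_int b -> unit_int c -> unit_int d ->
  b <= a -> c <= d ->
  U (drastic_min a c) (drastic_min b d) <= U (drastic_min b c) (drastic_min a d).
Proof.
move=> Hcl Hcomm Hmono Hd a b c d ua ub uc ud ba cd.
have mono2 : forall x y z, unit_int x -> unit_int y -> unit_int z -> y <= z -> U x y <= U x z.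
  by move=> x y z ux uy uz yz; rewrite (Hcomm x y) // (Hcomm x z) //; apply: Hmono.
have [<-|ab] := eqVneq b a; first by [].
have [<-|cd'] := eqVneq c d; first by rewrite Hcomm //; apply: dmin_unit.
have b1 : b < 1.
  have : b < a by rewrite lt_neqAle ab ba.
  by case/andP: ua => _ a1 h; apply: lt_le_trans h a1.
have c1 : c < 1.
  have : c < d by rewrite lt_neqAle cd' cd.
  by case/andP: ud => _ d1 h; apply: lt_le_trans h d1.
rewrite !dminE // (lt_eqF b1) (lt_eqF c1).
have [ha|ha] := eqVneq a 1; have [hd|hd] := eqVneq d 1;
  rewrite ?(negbTE ha) ?(negbTE hd) /=.
- by rewrite hd Hd; case/andP: (Hcl c b uc ub).
- by rewrite Hcomm //; [apply: mono2 => //; exact: u0 | exact: u0].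
- by apply: mono2 => //; exact: u0.
- by [].
Qed.

Lemma H2max (V : R -> R -> R) :
  (forall x y, unit_int x -> unit_int y -> unit_int (V x y)) ->
  (forall x y, unit_int x -> unit_int y -> V x y = V y x) ->
  (forall x y z, unit_int x -> unit_int y -> unit_int z -> x <= y -> V x z <= V y z) ->
  V 0 1 = 0 ->
  forall a b c d, unit_int a -> unit_int b -> unit_int c -> unit_int d ->
  b <= a -> c <= d ->
  V (drastic_max b c) (drastic_max a d) <= V (drastic_max a c) (drastic_max b d).
Proof.
move=> Hcl Hcomm Hmono Hd a b c d ua ub uc ud ba cd.
have mono2 : forall x y z, unit_int x -> unit_int y -> unit_int z -> y <= z -> V x y <= V x z.
  by move=> x y z ux uy uz yz; rewrite (Hcomm x y) // (Hcomm x z) //; apply: Hmono.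
have [<-|ab] := eqVneq b a; first by [].
have [<-|cd'] := eqVneq c d; first by rewrite Hcomm //; apply: dmax_unit.
have a0 : 0 < a.
  have : b < a by rewrite lt_neqAle ab ba.
  by case/andP: ub => b0 _ h; apply: le_lt_trans b0 h.
have d0 : 0 < d.
  have : c < d by rewrite lt_neqAle cd' cd.
  by case/andP: uc => c0 _ h; apply: le_lt_trans c0 h.
rewrite !dmaxE // (gt_eqF a0) (gt_eqF d0).
have [hb|hb] := eqVneq b 0; have [hc|hc] := eqVneq c 0;
  rewrite ?(negbTE hb) ?(negbTE hc) /=.
- by rewrite hc Hd; case/andP: (Hcl a d ua ud).
- rewrite Hcomm //; last exact: u1.
  by apply: mono2 => //; exact: u1.
- by apply: Hmono => //; exact: u1.
- by [].
Qed.

End Main.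


Lemma rev_ext (R : realType) n (x : 'I_n -> R) (i : 'I_n) :
  ext x (n - 1 - i)%N = x (rperm n i).
Proof.
rewrite /rperm permE -ext_ord; congr ext => /=; have := ltn_ord i; lia.
Qed.

Theorem theorem11 (R : realType) :
  (forall oplus : R -> R -> R, uninorm oplus -> disjunctive oplus ->
     rearrangement (@drastic_min R) oplus) /\
  (forall otimes : R -> R -> R, uninorm otimes -> conjunctive otimes ->
     dual_rearrangement otimes (@drastic_max R)).
Proof.
split.
- move=> op [Hcl [Hcomm [Hassoc [Hmono [e [He He1]]]]]] Hd n x y s n0 hx hy.
  have ux : forall i, unit_int (x i) by case: hx.
  have uy : forall i, unit_int (y i) by case: hy.
  have E : forall (p : 'S_n) (g : nat -> R),
     (forall i : 'I_n, g i = x (p i)) -> (forall i, unit_int (g i)) ->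
     iter_op op n (fun i => drastic_min (g i) (ext y i)) =
     S He Hcl (@drastic_min R) x y p.
    move=> p g hg ug; rewrite (iter_big He Hcl Hcomm Hassoc He1) //.
      by apply: BB_ext => i; rewrite hg ext_ord.
    by move=> i; apply: dmin_unit => //; apply: ext_unit.
  have mono : forall a b c, unit_int a -> unit_int b -> unit_int c ->
     (fun a b => a <= b) a b -> (fun a b => a <= b) (op a c) (op b c).
    by move=> a b c ua ub uc /= ab; apply: Hmono.
  have H2 := H2min Hcl Hcomm Hmono Hd.
  rewrite (E (rperm n) (fun i => ext x (n - 1 - i))); last 2 first.
  - by move=> i; rewrite rev_ext.
  - by move=> i; apply: ext_unit.
  rewrite (E s (ext (fun j => x (s j)))); last 2 first.
  - by move=> i; rewrite ext_ord.
  - by apply: ext_unit => i; apply: ux.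
  rewrite (E 1%g (ext x)); last 2 first.
  - by move=> i; rewrite ext_ord perm1.
  - by apply: ext_unit.
  have hyp : forall i : 'I_n, (n <= i)%N -> False by move=> i; have := ltn_ord i; lia.
  split.
  + have := (torev He Hcl Hcomm Hassoc He1 (rel := fun a b => a <= b) (@lexx _ _) (fun a b c (h1 : a <= b) h2 => le_trans h1 h2) mono
       (@dmin_unit R) H2 hx hy (m := n) (s := s)).
    by apply => i /hyp.
  + have := (toid He Hcl Hcomm Hassoc He1 (rel := fun a b => a <= b) (@lexx _ _) (fun a b c (h1 : a <= b) h2 => le_trans h1 h2) mono
       (@dmin_unit R) H2 hx hy (m := n) (s := s)).
    by apply => i /hyp.
- move=> op [Hcl [Hcomm [Hassoc [Hmono [e [He He1]]]]]] Hd n x y s n0 hx hy.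
  have ux : forall i, unit_int (x i) by case: hx.
  have uy : forall i, unit_int (y i) by case: hy.
  have E : forall (p : 'S_n) (g : nat -> R),
     (forall i : 'I_n, g i = x (p i)) -> (forall i, unit_int (g i)) ->
     iter_op op n (fun i => drastic_max (g i) (ext y i)) =
     S He Hcl (@drastic_max R) x y p.
    move=> p g hg ug; rewrite (iter_big He Hcl Hcomm Hassoc He1) //.
      by apply: BB_ext => i; rewrite hg ext_ord.
    by move=> i; apply: dmax_unit => //; apply: ext_unit.
  have mono : forall a b c, unit_int a -> unit_int b -> unit_int c ->
     (fun a b => b <= a) a b -> (fun a b => b <= a) (op a c) (op b c).
    by move=> a b c ua ub uc /= ab; apply: Hmono.
  have H2 := H2max Hcl Hcomm Hmono Hd.
  rewrite (E (rperm n) (fun i => ext x (n - 1 - i))); last 2 first.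
  - by move=> i; rewrite rev_ext.
  - by move=> i; apply: ext_unit.
  rewrite (E s (ext (fun j => x (s j)))); last 2 first.
  - by move=> i; rewrite ext_ord.
  - by apply: ext_unit => i; apply: ux.
  rewrite (E 1%g (ext x)); last 2 first.
  - by move=> i; rewrite ext_ord perm1.
  - by apply: ext_unit.
  have hyp : forall i : 'I_n, (n <= i)%N -> False by move=> i; have := ltn_ord i; lia.
  split.
  + have := (torev He Hcl Hcomm Hassoc He1 (rel := fun a b => b <= a) (@lexx _ _) (fun a b c (h1 : b <= a) (h2 : c <= b) => le_trans h2 h1) mono
       (@dmax_unit R) H2 hx hy (m := n) (s := s)).
    by apply => i /hyp.
  + have := (toid He Hcl Hcomm Hassoc He1 (rel := fun a b => b <= a) (@lexx _ _) (fun a b c (h1 : b <= a) (h2 : c <= b) => le_trans h2 h1) mono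
       (@dmax_unit R) H2 hx hy (m := n) (s := s)).
    by apply => i /hyp.
Qed.
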